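(* In the setting described in the context, for all $\alpha,\beta\in(0,\infty)$ with $\alpha>\beta$ and all $t\ge0$: if $L^{(\alpha)}_{t\infty}>0$ then $L^{(\beta)}_{t\infty}=\infty$, whereas if $L^{(\beta)}_{t\infty}<\infty$ then $L^{(\alpha)}_{t\infty}=0$.
   Context: Let $(\Omega,\mathcal F,\mathbb P)$ be a probability space with a filtration $\{\mathcal F_t\}_{t\ge0}$ satisfying the usual conditions; (in)equalities between random variables hold a.s. A pricing kernel is an $\{\mathcal F_t\}$-adapted càdlàg semimartingale $\{\pi_t\}_{t\ge0}$ with (a) $\pi_t>0$, (b) $\mathbb E[\pi_t]<\infty$ for all $t\ge0$, (c) $\liminf_{t\to\infty}\mathbb E[\pi_t]=0$. Fix such a pricing kernel and set $P_{tT}=\pi_t^{-1}\mathbb E[\pi_T\mid\mathcal F_t]$ for $0\le t<T$. For $\lambda>0$, the tail-Pareto rate $L^{(\lambda)}_{tT}$ is defined by $P_{tT}=\left[1+\lambda^{-1}(T-t)L^{(\lambda)}_{tT}\right]^{-\lambda}$, i.e. $L^{(\lambda)}_{tT}=\lambda(T-t)^{-1}(P_{tT}^{-1/\lambda}-1)$. For a family $\{A_x\}_{x\in\mathbb R^+}$ of $\mathcal F_t$-measurable extended-real random variables, $\limsup_{x\to\infty}A_x:=\operatorname{ess\,inf}_{x}\operatorname{ess\,sup}_{y\ge x}A_y$, with essential supremum/infimum taken among $\mathcal F_t$-measurable random variables. The long tail-Pareto rate is $L^{(\lambda)}_{t\infty}=\limsup_{T\to\infty}L^{(\lambda)}_{tT}$.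 *)

(* Defs.v *)
From HB Require Import structures.
From mathcomp Require Import all_boot all_order all_algebra.
From mathcomp Require Import all_classical all_reals all_analysis.
From mathcomp Require Import measurable_realfun.
Set Implicit Arguments. Unset Strict Implicit. Unset Printing Implicit Defensive.
Import Order.TTheory GRing.Theory Num.Theory.
Import numFieldNormedType.Exports.
Local Open Scope classical_set_scope.
Local Open Scope ring_scope.

Section Defs.
Context {R : realType} {d : measure_display} {Omega : measurableType d}.
Variable Prob : probability Omega R.

Definition Gmeasurable {d'} {U : measurableType d'} (G : set (set Omega))
  (f : Omega -> U) := forall B : set U, measurable B -> G (f @^-1` B).

Definition filtration (F : R -> set (set Omega)) :=
  [/\ forall t, 0 <= t -> sigma_algebra setT (F t),
      forall t, 0 <= t -> F t `<=` measurable &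
      forall s t, 0 <= s -> s <= t -> F s `<=` F t].

Definition usual_filtration (F : R -> set (set Omega)) :=
  [/\ filtration F,
      forall N, Prob.-negligible N -> F 0 N &
      forall t A, 0 <= t -> (forall s, t < s -> F s A) -> F t A].

Definition adapted (F : R -> set (set Omega)) (X : R -> Omega -> R) :=
  forall t, 0 <= t -> Gmeasurable (F t) (X t).

Definition cadlag (X : R -> Omega -> R) :=
  forall w t, 0 <= t ->
    (X s w @[s --> t^'+] --> X t w) /\ (0 < t -> cvg (X s w @[s --> t^'-])).

Definition is_cond_exp (G : set (set Omega)) (X Y : Omega -> R) :=
  [/\ Gmeasurable G Y, Prob.-integrable setT (EFin \o Y) &
      forall A, G A -> (\int[Prob]_(w in A) (Y w)%:E = \int[Prob]_(w in A) (X w)%:E)%E].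

Definition martingale (F : R -> set (set Omega)) (M : R -> Omega -> R) :=
  [/\ adapted F M,
      forall t, 0 <= t -> Prob.-integrable setT (EFin \o M t) &
      forall s t, 0 <= s -> s <= t -> is_cond_exp (F s) (M t) (M s)].

Definition stopping_time (F : R -> set (set Omega)) (tau : Omega -> \bar R) :=
  (forall w, (0 <= tau w)%E) /\
  (forall t, 0 <= t -> F t [set w | (tau w <= t%:E)%E]).

Definition stopped (X : R -> Omega -> R) (tau : Omega -> \bar R) : R -> Omega -> R :=
  fun t w => X (if (tau w < t%:E)%E then fine (tau w) else t) w.

Definition local_martingale (F : R -> set (set Omega)) (M : R -> Omega -> R) :=
  adapted F M /\ cadlag M /\
  exists tau : nat -> Omega -> \bar R,
    [/\ forall n, stopping_time F (tau n),
        {ae Prob, forall w, {homo (fun n => tau n w) : n m / (n <= m)%N >-> (n <= m)%E}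
                       /\ ((fun n => tau n w) @ \oo --> +oo%E)} &
        forall n, martingale F (stopped M (tau n))].

Definition finite_variation (A : R -> Omega -> R) :=
  forall w t, 0 <= t -> bounded_variation 0 t (fun s => A s w).

Definition semimartingale (F : R -> set (set Omega)) (X : R -> Omega -> R) :=
  adapted F X /\ cadlag X /\
  exists M A : R -> Omega -> R,
    [/\ local_martingale F M, forall w, M 0 w = 0,
        adapted F A /\ cadlag A /\ finite_variation A, forall w, A 0 w = 0 &
        forall t w, 0 <= t -> X t w = X 0 w + M t w + A t w].

Definition pricing_kernel (F : R -> set (set Omega)) (pi : R -> Omega -> R) :=
  [/\ semimartingale F pi,
      forall t, 0 <= t -> {ae Prob, forall w, 0 < pi t w},
      forall t, 0 <= t -> Prob.-integrable setT (EFin \o pi t) &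
      limf_einf (fun t => (\int[Prob]_w (pi t w)%:E)%E) (pinfty_nbhs R) = 0%E].

Definition bond_prices (F : R -> set (set Omega)) (pi : R -> Omega -> R)
  (P : R -> R -> Omega -> R) :=
  forall t T, 0 <= t -> t < T -> is_cond_exp (F t) (pi T) (fun w => pi t w * P t T w).

Definition tail_pareto_rate (lam t T : R) (PtT : R) : R :=
  lam * (T - t)^-1 * (PtT `^ (- lam^-1) - 1).

Definition is_ess_sup {I : Type} (G : set (set Omega)) (S : set I)
  (A : I -> Omega -> \bar R) (Z : Omega -> \bar R) :=
  [/\ Gmeasurable G Z,
      forall i, S i -> {ae Prob, forall w, (A i w <= Z w)%E} &
      forall Z', Gmeasurable G Z' -> (forall i, S i -> {ae Prob, forall w, (A i w <= Z' w)%E}) ->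
        {ae Prob, forall w, (Z w <= Z' w)%E}].

Definition is_ess_inf {I : Type} (G : set (set Omega)) (S : set I)
  (A : I -> Omega -> \bar R) (Z : Omega -> \bar R) :=
  [/\ Gmeasurable G Z,
      forall i, S i -> {ae Prob, forall w, (Z w <= A i w)%E} &
      forall Z', Gmeasurable G Z' -> (forall i, S i -> {ae Prob, forall w, (Z' w <= A i w)%E}) ->
        {ae Prob, forall w, (Z' w <= Z w)%E}].

(** L is limsup_{T -> oo} A_T := ess inf_{x > 0} ess sup_{T >= x, T > t} A_T
    (the family A_T is only defined for T > t) *)
Definition is_ess_limsup (G : set (set Omega)) (t : R) (A : R -> Omega -> \bar R)
  (L : Omega -> \bar R) :=
  exists Sup : R -> Omega -> \bar R,
    (forall x, 0 < x -> is_ess_sup G [set y | x <= y /\ t < y] A (Sup x)) /\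
    is_ess_inf G [set x | 0 < x] Sup L.

Definition long_tail_pareto_rate (F : R -> set (set Omega)) (P : R -> R -> Omega -> R)
  (lam t : R) (L : Omega -> \bar R) :=
  is_ess_limsup (F t) t (fun T w => (tail_pareto_rate lam t T (P t T w))%:E) L.

End Defs.

(* Main.v *)
Require Import Defs.
From HB Require Import structures.
From mathcomp Require Import all_boot all_order all_algebra.
From mathcomp Require Import all_classical all_reals all_analysis.
From mathcomp Require Import measurable_realfun.
From mathcomp Require Import ring lra.
Import Order.TTheory GRing.Theory Num.Theory.
Local Open Scope classical_set_scope.
Local Open Scope ring_scope.

Lemma key_bound (R : realType) (a b e : R) : 0 < b -> b < a -> 0 < e ->
  exists S0 : R, 0 < S0 /\ forall s p c : R, S0 <= s ->
   b * s^-1 * (p `^ (- b^-1) - 1) <= c ->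
   a * s^-1 * (p `^ (- a^-1) - 1) <= e * (Num.max c 0 + 1).
Proof.
move=> b0 ba e0.
have a0 : 0 < a by lra.
set r := b / a.
have r0 : 0 < r by rewrite /r divr_gt0.
have r1 : r < 1 by rewrite /r ltr_pdivrMr // mul1r.
set q := e * b / a.
have q0 : 0 < q by rewrite /q divr_gt0 // mulr_gt0.
have r1n : r - 1 != 0 by rewrite subr_eq0 lt_eqF.
set K := q `^ (r - 1)^-1.
have K0 : 0 < K by rewrite /K powR_gt0.
have HK : K `^ (r - 1) = q by rewrite /K -powRrM mulVf // powRr1 // ltW.
have Kr0 : 0 <= K `^ r by apply: powR_ge0.
exists ((a * K `^ r + e * b) / e); split.
  by rewrite divr_gt0 // ltr_wpDl ?mulr_ge0 ?mulr_gt0 // ltW.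
move=> s p c Ss H.
have s0 : 0 < s.
  apply: lt_le_trans Ss; by rewrite divr_gt0 // ltr_wpDl ?mulr_ge0 ?mulr_gt0 // ltW.
set c' := Num.max c 0.
have cc' : c <= c' by rewrite /c' le_max lexx.
have c'0 : 0 <= c' by rewrite /c' le_max lexx orbT.
set M := 1 + c' * s / b.
have M1 : 1 <= M by rewrite /M lerDl divr_ge0 ?mulr_ge0 // ltW.
set u := p `^ (- b^-1).
have Hu : u <= M.
  have : b * s^-1 * (u - 1) <= c' by apply: le_trans cc'.
  move=> h.
  have e1 : u - 1 = (s / b) * (b * s^-1 * (u - 1)).
    by field; apply/andP; split; apply/lt0r_neq0.
  have : (s / b) * (b * s^-1 * (u - 1)) <= (s / b) * c'.
    by apply: ler_wpM2l => //; rewrite divr_ge0 // ltW.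
  rewrite -e1 /M => h2; have -> : c' * s / b = s / b * c' by ring.
  lra.
have Hpa : p `^ (- a^-1) = u `^ r.
  rewrite /u -powRrM; congr (_ `^ _); rewrite /r; field.
  by apply/andP; split; apply/lt0r_neq0.
have C1 : p `^ (- a^-1) <= M `^ r.
  rewrite Hpa; apply: (ge0_ler_powR (ltW r0)) => //.
    by rewrite nnegrE powR_ge0.
  by rewrite nnegrE (le_trans ler01 M1).
have M0 : 0 < M by apply: lt_le_trans M1.
have C2 : M `^ r <= K `^ r + q * M.
  have [MK|KM] := leP M K.
    apply: (le_trans (y := K `^ r)); last by rewrite lerDl mulr_ge0 // ltW.
    apply: (ge0_ler_powR (ltW r0)) => //; by rewrite nnegrE ltW.
  have -> : M `^ r = M `^ (r - 1) * M.
    rewrite -{3}(powRr1 (ltW M0)) -powRD; first by congr (_ `^ _); ring.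
    by apply/implyP => _; apply/lt0r_neq0.
  have h : M `^ (r - 1) <= q.
    rewrite -HK (_ : r - 1 = - (1 - r)); last by ring.
    rewrite !powRN lef_pV2 ?posrE ?powR_gt0 //.
    apply: (ge0_ler_powR); rewrite ?nnegrE ?ltW //.
    by rewrite subr_gt0.
  apply: (le_trans (y := q * M)); last by rewrite lerDr.
  by apply: ler_wpM2r => //; exact: ltW.
have C3 : a * s^-1 * (K `^ r + q * M) = (a * K `^ r + e * b) * s^-1 + e * c'.
  have an := lt0r_neq0 a0; have bn := lt0r_neq0 b0; have sn := lt0r_neq0 s0.
  rewrite /q /M; field; by rewrite ?an ?bn ?sn.
have C4 : (a * K `^ r + e * b) * s^-1 <= e.
  by move: Ss; rewrite !ler_pdivrMr // [s * e]mulrC.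
have C5 : a * s^-1 * (p `^ (- a^-1) - 1) <= a * s^-1 * (K `^ r + q * M).
  apply: ler_wpM2l; first by rewrite mulr_ge0 // ?invr_ge0 ltW.
  apply: (le_trans (y := p `^ (- a^-1))); first by rewrite lerBlDr lerDl.
  exact: le_trans C1 C2.
apply: (le_trans C5); rewrite C3 mulrDr mulr1 addrC.
by apply: lerD => //.
Qed.

Lemma real_le0 (R : realType) (K r : R) : (forall n : nat, r <= K / n.+1%:R) -> r <= 0.
Proof.
move=> H; rewrite leNgt; apply/negP => r0.
have := Num.Theory.truncnS_gt (K / r); set m := (Num.truncn (K / r)).+1%:R => hm.
have m0 : 0 < m by rewrite /m ltr0Sn.
have := H (Num.truncn (K / r)); rewrite -/m.
rewrite ler_pdivlMr // => h.
move: hm; rewrite ltr_pdivrMr // => h2.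
have : r * m < r * m by apply: le_lt_trans h _; rewrite mulrC.
by rewrite ltxx.
Qed.

Section Helpers.
Context {R : realType} {d : measure_display} {Omega : measurableType d}.

Lemma sig_T (G : set (set Omega)) : sigma_algebra setT G -> G setT.
Proof. by case=> G0 GC _; rewrite -(setD0 setT); apply: GC. Qed.

Lemma Gmeas_cst (G : set (set Omega)) (z : \bar R) : sigma_algebra setT G ->
  Gmeasurable G (fun _ : Omega => z).
Proof.
move=> HG B _; have [Bz|Bz] := pselect (B z).
  rewrite (_ : _ @^-1` _ = setT); first exact: sig_T.
  by apply/seteqP; split.
rewrite (_ : _ @^-1` _ = set0); first by case: HG.
by apply/seteqP; split.
Qed.

Lemma Gmeas_comp (G : set (set Omega)) (g : \bar R -> \bar R) (Y : Omega -> \bar R) :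
  measurable_fun setT g -> Gmeasurable G Y -> Gmeasurable G (g \o Y).
Proof.
move=> mg mY B mB; have := mg measurableT B mB; rewrite setTI => h.
exact: (mY _ h).
Qed.

Lemma Gbigcap (G : set (set Omega)) (A : nat -> set Omega) : sigma_algebra setT G ->
  (forall n, G (A n)) -> G (\bigcap_n A n).
Proof.
move=> HG GA; have [G0 GC GU] := HG.
rewrite (_ : \bigcap_n A n = setT `\` \bigcup_n (setT `\` A n)).
  by apply: (GC); apply: (GU) => n; apply: (GC).
apply/seteqP; split => w /=.
  move=> h; split => // -[n _ /= [_]]; apply; exact: h.
move=> [_ h] n _; apply: contrapT => An; apply: h; exists n => //.
Qed.

Lemma Gmeas_ind (G : set (set Omega)) (E : set Omega) : sigma_algebra setT G -> G E ->
  Gmeasurable G (fun w => if `[< E w >] then +oo%E else (-oo : \bar R)%E).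
Proof.
move=> HG GE B _; have [G0 GC GU] := HG.
have [By|By] := pselect (B +oo%E); have [Bn|Bn] := pselect (B -oo%E).
- rewrite (_ : _ @^-1` _ = setT); first exact: sig_T.
  by apply/seteqP; split => w /=; case: asboolP => Ew /=; tauto.
- rewrite (_ : _ @^-1` _ = E) //.
  by apply/seteqP; split => w /=; case: asboolP => Ew /=; tauto.
- rewrite (_ : _ @^-1` _ = setT `\` E); first exact: (GC).
  by apply/seteqP; split => w /=; case: asboolP => Ew /=; tauto.
- rewrite (_ : _ @^-1` _ = set0) //.
  by apply/seteqP; split => w /=; case: asboolP => Ew /=; tauto.
Qed.

End Helpers.

Lemma lb_tail (R : realType) (alpha t T p : R) (n : nat) : 0 < alpha ->
  t + 1 + n%:R <= T ->
  - (alpha / n.+1%:R) <= alpha * (T - t)^-1 * (p `^ (- alpha^-1) - 1).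
Proof.
move=> a0 hT.
have n0 : 0 < n.+1%:R :> R by rewrite ltr0Sn.
have hs : n.+1%:R <= T - t by rewrite -natr1; lra.
have s0 : 0 < T - t by apply: lt_le_trans hs.
have h1 : alpha * (T - t)^-1 <= alpha / n.+1%:R.
  by apply: ler_wpM2l; [exact: ltW | rewrite lef_pV2 ?posrE].
have h2 : 0 <= alpha * (T - t)^-1 by rewrite mulr_ge0 // ?invr_ge0 ltW.
have h3 : -1 <= p `^ (- alpha^-1) - 1 by have := powR_ge0 p (- alpha^-1); lra.
have : alpha * (T - t)^-1 * (-1) <= alpha * (T - t)^-1 * (p `^ (- alpha^-1) - 1).
  exact: ler_wpM2l.
rewrite mulrN1 => h; apply: le_trans h; by rewrite lerN2.
Qed.

Theorem proposition4 (R : realType) (d : measure_display) (Omega : measurableType d)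
  (Prob : probability Omega R) (F : R -> set (set Omega)) (pi : R -> Omega -> R)
  (P : R -> R -> Omega -> R) :
  usual_filtration Prob F ->
  pricing_kernel Prob F pi ->
  bond_prices Prob F pi P ->
  forall alpha beta : R, 0 < beta -> beta < alpha ->
  forall t : R, 0 <= t ->
  forall La Lb : Omega -> \bar R,
    long_tail_pareto_rate Prob F P alpha t La ->
    long_tail_pareto_rate Prob F P beta t Lb ->
    {ae Prob, forall w, (0 < La w)%E -> Lb w = +oo%E} /\
    {ae Prob, forall w, (Lb w < +oo)%E -> La w = 0%E}.
Proof.
move=> HF _ _ alpha beta b0 ba t t0 La Lb [Supa [HSa HLa]] [Supb [HSb HLb]].
have HG : sigma_algebra setT (F t) by case: HF => -[H _ _] _ _; exact: H t t0.
have a0 : 0 < alpha by apply: lt_trans ba.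
have LaGe0 : {ae Prob, forall w, (0 <= La w)%E}.
  case: HLa => _ _ H3; apply: (H3 (fun _ => 0%E)); first exact: Gmeas_cst.
  move=> x /= x0; case: (HSa x x0) => _ H2 _.
  pose T := fun n : nat => Num.max x (t + 1) + n%:R.
  have HT n : x <= T n /\ t < T n.
    split; rewrite /T.
      apply: (le_trans (y := Num.max x (t + 1))); first by rewrite le_max lexx.
      by rewrite lerDl ler0n.
    apply: (lt_le_trans (y := t + 1)); first lra.
    apply: (le_trans (y := Num.max x (t + 1))); first by rewrite le_max lexx orbT.
    by rewrite lerDl ler0n.
  have : {ae Prob, forall w, forall n,
     ((tail_pareto_rate alpha t (T n) (P t (T n) w))%:E <= Supa x w)%E}.
    by apply: ae_foralln => n; exact: (H2 (T n) (HT n)).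
  apply: filterS => w Hw.
  have Hn n : ((- (alpha / n.+1%:R))%:E <= Supa x w)%E.
    apply: le_trans (Hw n); rewrite lee_fin /tail_pareto_rate.
    apply: lb_tail => //; rewrite /T.
    by rewrite lerD2r le_max lexx orbT.
  move: Hn; case: (Supa x w) => [r| |] Hn //.
    rewrite lee_fin; rewrite -oppr_le0; apply: (@real_le0 _ alpha) => n.
    by have := Hn n; rewrite lee_fin lerNl.
  by have := Hn 0%N.
have monoB x y : 0 < x -> x <= y -> {ae Prob, forall w, (Supb y w <= Supb x w)%E}.
  move=> x0 xy; have y0 : 0 < y by apply: lt_le_trans xy.
  case: (HSb y y0) => _ _ H3; case: (HSb x x0) => Hm H2 _.
  apply: H3 => // i [yi ti]; apply: H2; split => //; exact: le_trans xy yi.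
have SbM N : Gmeasurable (F t) (Supb N.+1%:R).
  by case: (HSb N.+1%:R (ltr0Sn _ _)).
pose E := \bigcap_n (Supb n.+1%:R) @^-1` [set +oo%E].
have GE : F t E.
  by apply: Gbigcap => // n; apply: SbM; exact: emeasurable_set1.
have EL : {ae Prob, forall w, E w -> Lb w = +oo%E}.
  case: HLb => _ _ H3.
  have hZ : {ae Prob, forall w, ((if `[< E w >] then +oo%E else -oo%E) <= Lb w)%E}.
    apply: (H3 _ (Gmeas_ind _ _ HG GE)) => x x0.
    have hx : x <= (Num.truncn x).+1%:R by apply: ltW; exact: Num.Theory.truncnS_gt.
    have := monoB x _ x0 hx; apply: filterS => w h.
    case: asboolP => Ew; last exact: leNye.
    by move: h; rewrite (Ew (Num.truncn x) I).
  move: hZ; apply: filterS => w h Ew; move: h; rewrite (asboolT Ew) leye_eq => /eqP.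
  by [].
have StepD N n : {ae Prob, forall w,
    (La w <= ((n.+1%:R)^-1)%:E * (maxe (Supb N.+1%:R w) 0 + 1))%E}.
  pose e : R := (n.+1%:R)^-1.
  have e0 : 0 < e by rewrite /e invr_gt0 ltr0Sn.
  have [S0 [S00 HS0]] := key_bound _ _ _ _ b0 ba e0.
  pose N' : R := N.+1%:R.
  have N'0 : 0 < N' by rewrite /N' ltr0Sn.
  pose x := Num.max (t + S0) N'.
  have x0 : 0 < x by apply: (lt_le_trans N'0); rewrite /x le_max lexx orbT.
  case: HLa => _ HLa2 _; have h1 := HLa2 x x0.
  case: (HSa x x0) => _ _ H3.
  have h2 : {ae Prob, forall w, (Supa x w <= e%:E * (maxe (Supb N' w) 0 + 1))%E}.
    apply: H3.
      apply: (Gmeas_comp _ (fun z => e%:E * (maxe z 0 + 1))%E); last exact: SbM.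
      apply: measurable_funeM; apply: emeasurable_funD; last exact: measurable_cst.
      by apply: measurable_maxe; [exact: measurable_id | exact: measurable_cst].
    move=> T [xT tT].
    have NT : N' <= T by apply: le_trans xT; rewrite /x le_max lexx orbT.
    have ST : S0 <= T - t by move: xT; rewrite /x ge_max => /andP[h _]; lra.
    case: (HSb N' N'0) => _ H2b _.
    have := H2b T (conj NT tT); apply: filterS => w.
    case: (Supb N' w) => [c| |] hb.
    - rewrite lee_fin in hb.
      rewrite -EFin_max -EFinD -EFinM lee_fin.
      exact: HS0 ST hb.
    - by rewrite maxye addye // gt0_muley ?lte_fin // leey.
    - by rewrite leeNy_eq in hb.
  by move: h1 h2; apply: filterS2 => w; exact: le_trans.
have D' : {ae Prob, forall w, forall N n : nat,
    (La w <= ((n.+1%:R)^-1)%:E * (maxe (Supb N.+1%:R w) 0 + 1))%E}.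
  by apply: ae_foralln => N; apply: ae_foralln => n; exact: StepD.
have Main : {ae Prob, forall w, (Lb w < +oo)%E -> La w = 0%E}.
  move: LaGe0 EL D'; apply: filterS3 => w h1 h2 h3 hLb.
  have nE : ~ E w.
    by move=> Ew; move: hLb; rewrite (h2 Ew) ltxx.
  have [N HN] : exists N, Supb N.+1%:R w != +oo%E.
    apply: contrapT => H; apply: nE => n _ /=.
    apply: contrapT => hn; apply: H; exists n; exact/eqP.
  have [m Hm] : exists m : R, forall n, (La w <= (m / n.+1%:R)%:E)%E.
    move: HN (h3 N); case: (Supb N.+1%:R w) => [c| |] // _ h3N.
      exists (Num.max c 0 + 1) => n; have := h3N n.
      by rewrite -EFin_max -EFinD -EFinM mulrC.
    exists 1 => n; have := h3N n.
    by rewrite maxNye add0e -EFinM mulrC.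
  move: h1 Hm; case: (La w) => [r| |] // h1 Hm.
    congr (_%:E); apply: le_anti; rewrite lee_fin in h1; rewrite h1 andbT.
    by apply: (@real_le0 _ m) => n; rewrite -lee_fin.
  by have := Hm 0%N.
split => //.
apply: filterS Main => w h Hpos.
apply: contrapT => hne; have := h _.
have hl : (Lb w < +oo)%E by rewrite ltey; apply/eqP.
by move=> /(_ hl) h0; move: Hpos; rewrite h0 ltxx.
Qed.
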